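(* Let $k\ge 2$ and let $p_1,\dots,p_k\ge 2$ be integers. Then the iterated permutational wreath product $W=C_{p_k}\wr\cdots\wr C_{p_1}$ satisfies $cw(W)=1$.
   Context: Each cyclic group $C_{p_i}$ acts on $\{1,\dots,p_i\}$ by cyclic shifts, and $H\wr C_{p}=H^{p}\rtimes C_{p}$ is the permutational wreath product; the iterated wreath product is associative. The commutator width $cw(G)$ is the least $n$ such that every element of $G'$ is a product of at most $n$ commutators. *)

(* Defs.v *)
From mathcomp Require Import all_boot all_fingroup.
Set Implicit Arguments. Unset Strict Implicit. Unset Printing Implicit Defensive.
Import GroupScope.

(* Leaves of the spherically homogeneous rooted tree with branching
   p 0, p 1, ..., p (k-1): tuples x = (x_0, ..., x_{k-1}) with x_i < p i.
   Level 0 corresponds to the top group C_{p_1}. *)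
Definition leaf (k : nat) (p : 'I_k -> nat) : finType :=
  {dffun forall i : 'I_k, 'I_(p i)}.

Definition shift k (p : 'I_k -> nat) (s : {perm leaf p}) (x : leaf p) (i : 'I_k)
  : nat := (val (s x i) + p i - val (x i)) %% p i.

(* The iterated permutational wreath product
   C_{p (k-1)} wr ... wr C_{p 0}, in its faithful action on the leaves:
   the permutations s for which, at every level i, s acts on the i-th
   coordinate by a cyclic shift depending only on the prefix x_0..x_{i-1},
   i.e.  s(x)_i = x_i + f_i(x_0,...,x_{i-1}) mod p i. *)
Definition iter_wreath k (p : 'I_k -> nat) : {set {perm leaf p}} :=
  [set s : {perm leaf p} |
    [forall i : 'I_k, forall x : leaf p, forall y : leaf p,
      [forall j : 'I_k, (j < i)%N ==> (x j == y j)] ==>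
      (shift s x i == shift s y i)]].

(* Main.v *)
Require Import Defs.
From mathcomp Require Import all_boot all_fingroup.
From mathcomp Require Import zify.
Set Implicit Arguments. Unset Strict Implicit. Unset Printing Implicit Defensive.
Import GroupScope.

Section Main.
Variables (k : nat) (p : 'I_k -> nat).
Hypothesis hp : forall i, (2 <= p i)%N.
Local Notation L := (leaf p).
Local Notation W := (iter_wreath p).

Lemma p_pos i : (0 < p i)%N.
Proof. by apply: ltnW; apply: hp. Qed.

Definition agree (n : nat) (x y : L) := forall j : 'I_k, (j < n)%N -> x j = y j.

Lemma memW (s : {perm L}) : s \in W <-> forall (i : 'I_k) x y, agree i x y -> shift s x i = shift s y i.
Proof.
rewrite inE; split.
  move=> /forallP H i x y Hxy.
  move: (H i) => /forallP /(_ x) /forallP /(_ y) /implyP Hi.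
  apply/eqP; apply: Hi; apply/forallP => j; apply/implyP => Hj.
  by rewrite Hxy.
move=> H; apply/forallP => i; apply/forallP => x; apply/forallP => y.
apply/implyP => /forallP Hxy; apply/eqP; apply: H => j Hj.
by apply/eqP; move/implyP: (Hxy j); apply.
Qed.

Lemma shift_lt (s : {perm L}) (x : L) (i : 'I_k) : (shift s x i < p i)%N.
Proof. by rewrite /shift ltn_pmod // p_pos. Qed.

Lemma shiftE (s : {perm L}) (x : L) (i : 'I_k) : val (s x i) = (val (x i) + shift s x i) %% p i.
Proof.
rewrite /shift modnDmr.
have h1 := ltn_ord (x i); have h2 := ltn_ord (s x i).
rewrite addnC subnK; last by apply: leq_trans (ltnW h1) (leq_addl _ _).
by rewrite modnDr modn_small.
Qed.

Lemma shift_uniq (s : {perm L}) (x : L) (i : 'I_k) d : (d < p i)%N -> val (s x i) = (val (x i) + d) %% p i ->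
  shift s x i = d.
Proof.
move=> Hd E; rewrite shiftE in E.
move/eqP: E; rewrite eqn_modDl => /eqP.
by rewrite !modn_small // shift_lt.
Qed.

Lemma W_agree (s : {perm L}) n (x y : L) : s \in W -> agree n x y -> agree n (s x) (s y).
Proof.
move=> /memW sW Hxy j Hj; apply: val_inj.
rewrite !shiftE (Hxy j Hj) (sW j x y) // => j' Hj'.
by apply: Hxy; apply: ltn_trans Hj.
Qed.

Lemma shiftM (s t : {perm L}) (x : L) (i : 'I_k) :
  shift (s * t) x i = (shift s x i + shift t (s x) i) %% p i.
Proof.
apply: shift_uniq; first by rewrite ltn_pmod // p_pos.
by rewrite permM shiftE (shiftE s) modnDml modnDmr addnA.
Qed.

Lemma shift1 (x : L) (i : 'I_k) : shift 1 x i = 0%N.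
Proof.
apply: shift_uniq; first exact: p_pos.
by rewrite perm1 addn0 modn_small //; apply: ltn_ord.
Qed.

Lemma W_group : group_set W.
Proof.
apply/andP; split.
  by apply/memW => i x y _; rewrite !shift1.
apply/subsetP => z /mulsgP [s t sW tW ->].
apply/memW => i x y Hxy.
rewrite !shiftM ((memW s).1 sW i x y Hxy).
by rewrite ((memW t).1 tW i (s x) (s y) (W_agree sW Hxy)).
Qed.

Canonical W_G := Group W_group.

Definition mkfun (f : 'I_k -> L -> nat) (x : L) : L :=
  @finfun 'I_k (fun i => 'I_(p i)) (fun i => Ordinal (ltn_pmod (val (x i) + f i x) (p_pos i))).

Lemma mkfun_val f (x : L) (i : 'I_k) : val (mkfun f x i) = (val (x i) + f i x) %% p i.
Proof. by rewrite /mkfun ffunE. Qed.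

Definition prefixed (f : 'I_k -> L -> nat) :=
  forall (i : 'I_k) x y, agree i x y -> f i x = f i y.

Lemma mkfun_inj f : prefixed f -> injective (mkfun f).
Proof.
move=> Hf x y E.
suff H : forall n, agree n x y.
  by apply/ffunP => i; apply: (H i.+1) => //.
elim=> [|n IH] j Hj; first by [].
case: (ltnP j n) => Hjn; first exact: IH.
have jn : nat_of_ord j = n by lia.
have := congr1 (fun z : L => val (z j)) E; rewrite /= !mkfun_val.
rewrite (Hf j x y); last by rewrite jn.
move/eqP; rewrite eqn_modDr !modn_small ?ltn_ord // => /eqP H.
exact: val_inj.
Qed.


Definition mkW f (Hf : prefixed f) : {perm L} := perm (mkfun_inj Hf).

Lemma mkW_val f (Hf : prefixed f) (x : L) (i : 'I_k) :
  val (mkW Hf x i) = (val (x i) + f i x) %% p i.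
Proof. by rewrite /mkW permE mkfun_val. Qed.

Lemma mkW_shift f (Hf : prefixed f) (x : L) (i : 'I_k) :
  shift (mkW Hf) x i = f i x %% p i.
Proof.
apply: shift_uniq; first by rewrite ltn_pmod // p_pos.
by rewrite mkW_val modnDmr.
Qed.

Lemma mkW_in f (Hf : prefixed f) : mkW Hf \in W.
Proof. by apply/memW => i x y Hxy; rewrite !mkW_shift (Hf i x y Hxy). Qed.

Definition x0 : L := @finfun 'I_k (fun i => 'I_(p i)) (fun i => Ordinal (p_pos i)).

Lemma x0_val i : val (x0 i) = 0%N.
Proof. by rewrite /x0 ffunE. Qed.

Definition Z (n : nat) := [set x : L | [forall j : 'I_k, (n <= j)%N ==> (val (x j) == 0%N)]].

Definition proj (n : nat) (y : L) : L :=
  @finfun 'I_k (fun i => 'I_(p i)) (fun j => if (j < n)%N then y j else x0 j).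

Lemma proj_agree n y : agree n y (proj n y).
Proof. by move=> j Hj; rewrite /proj ffunE Hj. Qed.

Lemma proj_Z n y : proj n y \in Z n.
Proof.
rewrite inE; apply/forallP => j; apply/implyP => Hj.
by rewrite /proj ffunE ltnNge Hj /= x0_val.
Qed.

Lemma Z_eq n x y : x \in Z n -> y \in Z n -> agree n x y -> x = y.
Proof.
rewrite !inE => /forallP Hx /forallP Hy Hxy; apply/ffunP => j.
case: (ltnP j n) => Hj; first exact: Hxy.
apply: val_inj.
by move/implyP: (Hx j) => /(_ Hj) /eqP ->; move/implyP: (Hy j) => /(_ Hj) /eqP ->.
Qed.

Lemma agree_sym n x y : agree n x y -> agree n y x.
Proof. by move=> H j Hj; rewrite H. Qed.

Lemma agree_trans n x y z : agree n x y -> agree n y z -> agree n x z.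
Proof. by move=> H1 H2 j Hj; rewrite H1 // H2. Qed.

Lemma sum_reindex (s t : {perm L}) (i : 'I_k) : s \in W -> t \in W ->
  \sum_(x in Z i) shift t (s x) i = \sum_(x in Z i) shift t x i.
Proof.
move=> sW tW.
have -> : \sum_(x in Z i) shift t (s x) i = \sum_(x in Z i) shift t (proj i (s x)) i.
  apply: eq_bigr => x _; apply: (memW t).1 => //; exact: proj_agree.
have inj : {in Z i &, injective (fun x => proj i (s x))}.
  move=> x y xZ yZ E; apply: (Z_eq xZ yZ).
  have H1 : agree i (s x) (s y).
    apply: (@agree_trans i _ (proj i (s x))); first exact: proj_agree.
    rewrite E; apply: agree_sym; exact: proj_agree.
  have sVW : s^-1 \in W by rewrite groupV.
  have := W_agree sVW H1.
  by rewrite -!permM !mulgV !perm1.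
rewrite -(big_imset (fun z => shift t z i) inj) /=.
apply: eq_bigl => z.
suff -> : [set proj i (s x) | x in Z i] = Z i by [].
apply/eqP; rewrite eqEcard (card_in_imset inj) leqnn andbT.
by apply/subsetP => z' /imsetP [x _ ->]; apply: proj_Z.
Qed.

Definition phi (i : 'I_k) (s : {perm L}) := (\sum_(x in Z i) shift s x i) %% p i.

Lemma phi_lt i s : (phi i s < p i)%N.
Proof. by rewrite ltn_pmod // p_pos. Qed.

Lemma phiM i s t : s \in W -> t \in W -> phi i (s * t) = (phi i s + phi i t) %% p i.
Proof.
move=> sW tW; rewrite /phi.
under eq_bigr do rewrite shiftM.
by rewrite modn_summ big_split /= sum_reindex // modnDm.
Qed.

Lemma phi1 i : phi i 1 = 0%N.
Proof. by rewrite /phi big1 ?mod0n // => x _; rewrite shift1. Qed.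

Definition K := [set s in W | [forall i, phi i s == 0%N]].

Lemma memK s : (s \in K) = (s \in W) && [forall i, phi i s == 0%N].
Proof. by rewrite /K in_set. Qed.

Lemma K_group : group_set K.
Proof.
apply/andP; split.
  by rewrite memK group1 /=; apply/forallP => i; rewrite phi1.
apply/subsetP => z /mulsgP [s t]; rewrite !memK => /andP [sW /forallP sK] /andP [tW /forallP tK] ->.
rewrite groupM //=; apply/forallP => i.
by rewrite phiM // (eqP (sK i)) (eqP (tK i)) mod0n.
Qed.

Canonical K_G := Group K_group.

Lemma phiV i s : s \in W -> (phi i s^-1 + phi i s) %% p i = 0%N.
Proof. by move=> sW; rewrite -phiM ?groupV // mulVg phi1. Qed.

Lemma arith4 a b c d m : (a + c) %% m = 0%N -> (b + d) %% m = 0%N ->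
  (((a + b) %% m + c) %% m + d) %% m = 0%N.
Proof.
move=> H1 H2.
have -> : ((a + b) %% m + c) %% m = (a + b + c) %% m by rewrite modnDml.
rewrite modnDml.
have -> : (a + b + c + d = (a + c) + (b + d))%N by lia.
by rewrite -modnDm H1 H2 mod0n.
Qed.

Lemma commK x y : x \in W -> y \in W -> [~ x, y] \in K.
Proof.
move=> xW yW; rewrite memK groupR //=; apply/forallP => i.
have xV : x^-1 \in W by rewrite groupV.
have yV : y^-1 \in W by rewrite groupV.
rewrite /commg /conjg !mulgA !phiM ?groupM //.
by apply/eqP; apply: arith4; apply: phiV.
Qed.

Lemma derW_K : [~: W, W] \subset K.
Proof.
rewrite gen_subG; apply/subsetP => z /imset2P [x y xW yW ->].
exact: commK.
Qed.


Definition cond (n : nat) (g : 'I_k -> nat) (x : L) : bool :=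
  [forall j : 'I_k, (j < n)%N ==> (val (x j) == g j)].

Lemma cond0 g x : cond 0 g x.
Proof. by apply/forallP. Qed.

Lemma cond_step n (o : 'I_k) (Ho : val o = n) g x :
  cond n.+1 g x = cond n g x && (val (x o) == g o).
Proof.
apply/forallP/andP.
  move=> A; split.
    apply/forallP => j; apply/implyP => Hj; apply: (implyP (A j)); exact: ltnW.
  by apply: (implyP (A o)); rewrite Ho.
case=> /forallP B C j; apply/implyP; rewrite ltnS leq_eqVlt => /orP [/eqP Ej | Hj].
  by have -> : j = o by apply: val_inj; rewrite /= Ej Ho.
exact: (implyP (B j)).
Qed.

Lemma cond_pre g : prefixed (fun i x => cond i g x).
Proof.
move=> i x y Hxy; rewrite /cond; congr (nat_of_bool _).
apply: eq_forallb => j; case Hj: (j < i)%N => //=.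
by rewrite Hxy.
Qed.

Definition fc (c : L) : 'I_k -> L -> nat :=
  fun i x => if cond i (fun _ => 0%N) x then val (c i) else 0%N.

Lemma fc_pre c : prefixed (fc c).
Proof.
move=> i x y Hxy; rewrite /fc.
have := cond_pre (fun _ => 0%N) Hxy => /= H.
by case: (cond i _ x) H; case: (cond i _ y).
Qed.

Definition sc c := mkW (fc_pre c).

Lemma sc_in c : sc c \in W.
Proof. exact: mkW_in. Qed.

Lemma phi_sc c i : phi i (sc c) = val (c i).
Proof.
have x0Z : x0 \in Z i.
  by rewrite inE; apply/forallP => j; apply/implyP => _; rewrite x0_val.
rewrite /phi (bigD1 x0) //= big1 ?addn0.
  rewrite /sc mkW_shift /fc.
  have -> : cond i (fun _ => 0%N) x0.
    by apply/forallP => j; apply/implyP => _; rewrite x0_val.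
  by rewrite !modn_small // ltn_ord.
move=> x /andP [xZ xn0]; rewrite /sc mkW_shift /fc.
case C: (cond i _ x); last by rewrite mod0n.
exfalso; move/negP: xn0; apply; apply/eqP; apply: (Z_eq xZ x0Z) => j Hj.
apply: val_inj; rewrite x0_val /=.
by move/forallP: C => /(_ j) /implyP /(_ Hj) /eqP.
Qed.

Lemma index_ge : (#|L| <= #|W : K|)%N.
Proof.
have inj : injective (fun c => K :* sc c).
  move=> c d /= E.
  have : sc c \in K :* sc d by rewrite -E rcoset_refl.
  rewrite mem_rcoset memK => /andP [_ /forallP H].
  apply/ffunP => i; apply: val_inj.
  have dV : (sc d)^-1 \in W by rewrite groupV sc_in.
  have := phiM i (groupM (sc_in c) dV) (sc_in d).
  rewrite mulgKV (eqP (H i)) add0n !phi_sc => ->.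
  by rewrite modn_small // ltn_ord.
rewrite -(card_imset _ inj) /indexg; apply: subset_leq_card.
apply/subsetP => _ /imsetP [c _ ->].
apply/imsetP; exists (sc c); last by rewrite rcosetE. exact (sc_in c).
Qed.

(* the odometer *)
Definition fa : 'I_k -> L -> nat := fun i x => cond i (fun j => (p j).-1) x.

Definition a := mkW (@cond_pre (fun j => (p j).-1)).

Definition P (n : nat) := (\prod_(j < k | (j < n)%N) p j)%N.
Definition e (n : nat) (x : L) := (\sum_(j < k | (j < n)%N) val (x j) * P j)%N.

Lemma pred_step n (o : 'I_k) (Ho : val o = n) (j : 'I_k) :
  ((j < n.+1)%N && (j != o)) = (j < n)%N.
Proof.
rewrite -val_eqE Ho ltnS.
by case: ltngtP.
Qed.

Lemma sum_step n (o : 'I_k) (Ho : val o = n) F :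
  (\sum_(j < k | (j < n.+1)%N) F j = \sum_(j < k | (j < n)%N) F j + F o)%N.
Proof.
rewrite (bigD1 o) /=; last by rewrite Ho.
by rewrite addnC; congr (_ + _)%N; apply: eq_bigl => j; rewrite pred_step.
Qed.

Lemma prod_step n (o : 'I_k) (Ho : val o = n) F :
  (\prod_(j < k | (j < n.+1)%N) F j = \prod_(j < k | (j < n)%N) F j * F o)%N.
Proof.
rewrite (bigD1 o) /=; last by rewrite Ho.
by rewrite mulnC; congr (_ * _)%N; apply: eq_bigl => j; rewrite pred_step.
Qed.

Lemma P_pos n : (0 < P n)%N.
Proof. by apply: prodn_gt0 => i; apply: p_pos. Qed.

Lemma enc_step n x : (n <= k)%N ->
  (e n (a x) + cond n (fun j => (p j).-1) x * P n = e n x + 1)%N.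
Proof.
elim: n => [|n IH] Hn.
  rewrite cond0 /e /P !big_pred0 //.
move: (IH (ltnW Hn)) => {}IH.
have o_lt : (n < k)%N by [].
set o := Ordinal o_lt.
have Ho : val o = n by [].
rewrite /e !(sum_step Ho) /P (prod_step Ho) (cond_step Ho).
rewrite -/(e n (a x)) -/(e n x) -/(P n) in IH *.
have ax : val (a x o) = (val (x o) + cond n (fun j => (p j).-1) x) %% p o.
  by rewrite /a mkW_val.
have po := hp o; have xo : (val (x o) < p o)%N := ltn_ord (x o).
have Pn := P_pos n.
case C: (cond n _ x) IH ax => /= IH ax.
  case D: (val (x o) == (p o).-1).
    move/eqP: D => D; rewrite D in ax.
    have E1 : ((p o).-1 + true)%N = p o by rewrite /=; lia.
    rewrite E1 modnn in ax; rewrite ax D /=.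
    rewrite mul1n in IH; nia.
  have D' : (val (x o) + 1 < p o)%N.
    move/negbT: D => D; lia.
  rewrite modn_small in ax => //.
  rewrite ax /=. rewrite mul1n in IH; nia.
rewrite addn0 modn_small in ax => //.
rewrite ax /=; rewrite mul0n addn0 in IH; nia.
Qed.

Lemma x0_e n : e n x0 = 0%N.
Proof. by rewrite /e big1 // => j _; rewrite x0_val. Qed.

Lemma orb m : (m < P k)%N -> e k ((a ^+ m) x0) = m.
Proof.
elim: m => [|m IH] Hm.
  by rewrite expg0 perm1 x0_e.
have := enc_step ((a ^+ m) x0) (leqnn k).
rewrite IH ?(ltnW Hm) // expgSr permM.
case: (cond k _ _) => /=; last by rewrite mul0n addn0 addn1.
rewrite mul1n; lia.
Qed.

Lemma cardL : #|L| = P k.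
Proof.
rewrite card_dep_ffun foldrE big_image /= /P.
rewrite [RHS](eq_bigl xpredT); last by move=> j; rewrite ltn_ord.
by apply: eq_bigr => i _; rewrite card_ord.
Qed.

Lemma a_trans y : exists m, y = (a ^+ m) x0.
Proof.
have inj : injective (fun m : 'I_(P k) => (a ^+ m) x0).
  move=> m1 m2 E; apply: ord_inj.
  by rewrite -(orb (ltn_ord m1)) -(orb (ltn_ord m2)) /= E.
have := inj_card_onto inj; rewrite card_ord cardL leqnn => /(_ isT y) /codomP [m ->].
by exists m.
Qed.

Lemma a_in : a \in W.
Proof. exact: mkW_in. Qed.

Lemma cent_le : (#|'C_W[a]| <= #|L|)%N.
Proof.
have inj : {in 'C_W[a] &, injective (fun c : {perm L} => c x0)}.
  move=> c d /setIP [_ /cent1P Hc] /setIP [_ /cent1P Hd] E.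
  apply/permP => y; have [m ->] := a_trans y.
  have Hcm := commuteX m Hc; have Hdm := commuteX m Hd.
  by rewrite -!permM -Hcm -Hdm !permM /= E.
by rewrite -(card_in_imset inj); apply: max_card.
Qed.

Definition S := [set [~ a, y] | y in W].

Lemma S_K : S \subset K.
Proof.
apply/subsetP => _ /imsetP [y yW ->].
by apply: (subsetP derW_K); apply: mem_commg => //; apply: a_in.
Qed.

Lemma class_le : (#|a ^: W| <= #|S|)%N.
Proof.
apply: (@leq_trans #|[set a * z | z in S]|); last exact: leq_imset_card.
apply: subset_leq_card; apply/subsetP => _ /imsetP [y yW ->].
apply/imsetP; exists [~ a, y]; first by apply: imset_f.
by rewrite /commg mulKVg.
Qed.

Lemma K_S : K \subset S.
Proof.
rewrite -(geq_leqif (subset_leqif_card S_K)).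
have KW : K \subset W by apply/subsetP => s; rewrite memK => /andP [].
have L1 := Lagrange KW.
have L2 := Lagrange (subsetIl W 'C[a]).
rewrite index_cent1 in L2.
have h1 := index_ge; have h2 := cent_le; have h3 := class_le.
have hL : (0 < #|L|)%N by rewrite cardL P_pos.
rewrite -(leq_pmul2r hL).
apply: (@leq_trans #|W|).
  by rewrite -L1 leq_mul2l h1 orbT.
rewrite -L2 mulnC; apply: leq_mul => //.
Qed.


Lemma derW_S g : g \in [~: W, W] ->
  exists2 x, x \in W & exists2 y, y \in W & g = [~ x, y].
Proof.
move=> /(subsetP derW_K) /(subsetP K_S) /imsetP [y yW ->].
exists a; first exact: a_in.
by exists y.
Qed.

Lemma der_nontriv (hk : (2 <= k)%N) : [~: W, W] != 1.
Proof.
have h0 : (0 < k)%N by apply: ltnW.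
set i0 : 'I_k := Ordinal h0.
set i1 : 'I_k := Ordinal hk.
have Hi0 : val i0 = 0%N by [].
have Hi1 : val i1 = 1%N by [].
pose e1 : L := @finfun 'I_k (fun i => 'I_(p i))
  (fun j => if val j == 1%N then Ordinal (hp j) else Ordinal (p_pos j)).
have e1_1 : val (e1 i1) = 1%N by rewrite /e1 ffunE.
have e1_0 : val (e1 i0) = 0%N by rewrite /e1 ffunE.
set y1 := sc e1.
have cond1 g x : cond 1 g x = (val (x i0) == g i0) by rewrite (cond_step Hi0) cond0.
have p0 := hp i0; have p1 := hp i1.
have ax0_0 : val (a x0 i0) = 1%N.
  rewrite /a mkW_val x0_val cond0 /=; rewrite modn_small //.
have ax0_1 : val (a x0 i1) = 0%N.
  rewrite /a mkW_val x0_val /=.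
  have -> : cond i1 (fun j => (p j).-1) x0 = false.
    by rewrite Hi1 cond1 x0_val; apply/negbTE; rewrite eq_sym -lt0n; lia.
  by rewrite mod0n.
have yx0_0 : val (y1 x0 i0) = 0%N.
  by rewrite /y1 /sc mkW_val x0_val /fc Hi0 cond0 e1_0 mod0n.
have yx0_1 : val (y1 x0 i1) = 1%N.
  rewrite /y1 /sc mkW_val x0_val /fc Hi1 cond1 x0_val eqxx e1_1.
  by rewrite modn_small.
have v1 : val (y1 (a x0) i1) = 0%N.
  rewrite /y1 /sc mkW_val ax0_1 /fc Hi1 cond1 ax0_0 /=.
  by rewrite mod0n.
have v2 : val (a (y1 x0) i1) = 1%N.
  rewrite /a mkW_val yx0_1 Hi1 cond1 yx0_0.
  have -> : (0 == (p i0).-1) = false by apply/negbTE; rewrite eq_sym -lt0n; lia.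
  by rewrite addn0 modn_small.
apply/negP => /eqP H.
have := mem_commg a_in (sc_in e1).
rewrite H inE => /commgP Hc.
have := congr1 (fun s : {perm L} => val (s x0 i1)) Hc.
by rewrite /= !permM -/y1 v1 v2.
Qed.

End Main.

Theorem corollary2 (k : nat) (p : 'I_k -> nat)
  (hk : (2 <= k)%N) (hp : forall i : 'I_k, (2 <= p i)%N) :
  [~: iter_wreath p, iter_wreath p] != 1 /\
  (forall g, g \in [~: iter_wreath p, iter_wreath p] ->
     exists2 x, x \in iter_wreath p &
     exists2 y, y \in iter_wreath p & g = [~ x, y]).
Proof.
split; first exact: der_nontriv hp hk.
exact: derW_S hp.
Qed.
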